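(* Suppose problem (P0-group) has a unique solution $v^*\in\mathbb{R}^M$. Suppose further that $x^*:=\nu^{-1}(v^* )\neq 0$ and that $y_i=(x^* )^TQ_ix^*$ for $i=1,\dots,N$. Then the solution set of problem (P0) is exactly $\{x^*,-x^*\}$.
   Context: Real setting. Let $n,N\ge 1$ and $M=n(n+1)/2$. Components of vectors in $\mathbb{R}^M$ are indexed by unordered pairs: for $1\le i,j\le n$ the symmetric index $ij$ ($=ji$) is $\sum_{k=1}^{\min\{i,j\}-1}(n-k+1)+|j-i|+1$. This is a bijection from unordered pairs $\{i,j\}$ (with $i=j$ allowed) onto $\{1,\dots,M\}$. The real Veronese map $\nu:\mathbb{R}^n\to\mathbb{R}^M$ is defined by $(\nu(x))_{ij}=x_ix_j$. For $j=1,\dots,n$, $W_j$ is the $n\times M$ binary matrix with $(W_j)_{k,l}=1$ if $l$ is the index $jk$ and $0$ otherwise. Thus $W_jv=(v_{j1},\dots,v_{jn})^T$, and in particular $W_j\nu(x)=x_jx$. $\|x\|_0$ is the number of nonzero entries of $x$. For vectors $u_1,\dots,u_n$, $\|\{u_j\}_{j=1}^n\|_0$ is the number of indices $j$ with $u_j\neq 0$. Data: vectors $q_1,\dots,q_N\in\mathbb{R}^n$, matrices $Q_i=q_iq_i^T$, and numbers $y_1,\dots,y_N\in\mathbb{R}$. The matrix $A\in\mathbb{R}^{N\times M}$ has entries $A_{i,jj}=q_{ij}^2$ and $A_{i,jk}=2q_{ij}q_{ik}$ for $j<k$, where $q_{ij}$ is the $j$-th entry of $q_i$. With this, $(q_i^Tx)^2=(A\nu(x))_i$.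 Inverse map $\nu^{-1}:\mathbb{R}^M\to\mathbb{R}^n$. Let $i$ be the smallest $j\in\{1,\dots,n\}$ with $v_{jj}>0$; if no such $j$ exists, set $i=0$. If $i>0$ and $v_{ji}^2/v_{ii}=v_{jj}$ for all $j=1,\dots,n$, then $\nu^{-1}(v)=\frac{1}{\sqrt{v_{ii}}}(v_{1i},v_{2i},\dots,v_{ni})^T$. Otherwise $\nu^{-1}(v)=0$. (P0): $\min_{x\in\mathbb{R}^n}\|x\|_0$ subject to $y_i=(q_i^Tx)^2=x^TQ_ix$ for $i=1,\dots,N$. (P0-group): $\min_{v\in\mathbb{R}^M}\|\{W_jv\}_{j=1}^n\|_0$ subject to $Av=y$ and $v_{jj}\ge 0$ for $j=1,\dots,n$. *)

(* Defs.v *)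
(* The real field R^n is generalised to an arbitrary real
   closed field R (needed for Num.sqrt in the inverse Veronese map). *)
From HB Require Import structures.
From mathcomp Require Import all_boot all_order all_algebra.
Set Implicit Arguments. Unset Strict Implicit. Unset Printing Implicit Defensive.
Import Order.TTheory GRing.Theory Num.Theory.
Local Open Scope ring_scope.

Definition symdim (n : nat) : nat := (n * n.+1)./2.

(* 0-based version of the paper's symmetric index: for 0-based i j (paper's
   i+1, j+1) the paper's index is
     sum_{k=1}^{min-1} (n-k+1) + |j-i| + 1 ;  we subtract 1. *)
Definition sidx (n i j : nat) : nat :=
  (\sum_(1 <= k < (minn i j).+1) (n - k + 1) + (maxn i j - minn i j))%N.

(* entry of v in R^M at the 0-based position k (0 if out of range) *)
Definition vent (R : nzRingType) (M : nat) (v : 'cV[R]_M) (k : nat) : R :=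
  match @insub _ (fun l => l < M)%N 'I_M k with
  | Some l => v l 0
  | None => 0
  end.

Definition vij (R : nzRingType) (n : nat) (v : 'cV[R]_(symdim n)) (i j : 'I_n) : R :=
  vent v (sidx n i j).

(* real Veronese map: (nu x)_{ij} = x_i x_j, defined entrywise through the
   index bijection (each l corresponds to exactly one pair j <= k). *)
Definition veronese (R : nzRingType) (n : nat) (x : 'cV[R]_n) : 'cV[R]_(symdim n) :=
  \col_(l < symdim n)
     \sum_(j < n) \sum_(k < n | (j <= k)%N && (sidx n j k == l)) x j 0 * x k 0.

Definition Wmx (R : nzRingType) (n : nat) (j : 'I_n) : 'M[R]_(n, symdim n) :=
  \matrix_(k < n, l < symdim n) (if sidx n j k == l then 1 else 0).

Definition l0 (R : nzRingType) (n : nat) (x : 'cV[R]_n) : nat :=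
  #|[set j : 'I_n | x j 0 != 0]|.

Definition l0group (R : nzRingType) (n : nat) (v : 'cV[R]_(symdim n)) : nat :=
  #|[set j : 'I_n | Wmx R j *m v != 0]|.

Definition Qmx (R : nzRingType) (n : nat) (q : 'cV[R]_n) : 'M[R]_n := q *m q^T.

Definition Amx (R : nzRingType) (N n : nat) (q : 'I_N -> 'cV[R]_n)
  : 'M[R]_(N, symdim n) :=
  \matrix_(i < N, l < symdim n)
     \sum_(j < n) \sum_(k < n | (j <= k)%N && (sidx n j k == l))
        (if j == k then q i j 0 ^+ 2 else 2 * q i j 0 * q i k 0).

Definition veronese_inv (R : rcfType) (n : nat) (v : 'cV[R]_(symdim n)) : 'cV[R]_n :=
  match [seq j <- enum 'I_n | 0 < vij v j j] with
  | i :: _ =>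
      if [forall j : 'I_n, vij v j i ^+ 2 / vij v i i == vij v j j]
      then \col_(j < n) ((Num.sqrt (vij v i i))^-1 * vij v j i)
      else 0
  | [::] => 0
  end.

Definition P0_feasible (R : nzRingType) (N n : nat) (q : 'I_N -> 'cV[R]_n)
  (y : 'I_N -> R) (x : 'cV[R]_n) : Prop :=
  forall i : 'I_N, y i = (x^T *m Qmx (q i) *m x) 0 0.

Definition P0_solution (R : nzRingType) (N n : nat) (q : 'I_N -> 'cV[R]_n)
  (y : 'I_N -> R) (x : 'cV[R]_n) : Prop :=
  P0_feasible q y x /\
  forall x' : 'cV[R]_n, P0_feasible q y x' -> (l0 x <= l0 x')%N.

Definition P0g_feasible (R : numDomainType) (N n : nat) (q : 'I_N -> 'cV[R]_n)
  (y : 'I_N -> R) (v : 'cV[R]_(symdim n)) : Prop :=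
  Amx q *m v = \col_(i < N) y i /\ forall j : 'I_n, 0 <= vij v j j.

Definition P0g_solution (R : numDomainType) (N n : nat) (q : 'I_N -> 'cV[R]_n)
  (y : 'I_N -> R) (v : 'cV[R]_(symdim n)) : Prop :=
  P0g_feasible q y v /\
  forall v' : 'cV[R]_(symdim n), P0g_feasible q y v' -> (l0group v <= l0group v')%N.

(* Main.v *)
Require Import Defs.
From HB Require Import structures.
From mathcomp Require Import all_boot all_order all_algebra.
From mathcomp Require Import zify ring.
Import Order.TTheory GRing.Theory Num.Theory.
Local Open Scope ring_scope.
Set Implicit Arguments. Unset Strict Implicit.

Local Open Scope nat_scope.
Definition Sn (n m : nat) : nat := \sum_(1 <= k < m.+1) (n - k + 1).

Lemma Sn0 n : Sn n 0 = 0%N.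
Proof. by rewrite /Sn big_geq. Qed.

Lemma SnS n m : Sn n m.+1 = (Sn n m + (n - m.+1 + 1))%N.
Proof. by rewrite /Sn big_nat_recr. Qed.

Lemma Sn_mono n a c : (a <= c)%N -> (Sn n a <= Sn n c)%N.
Proof.
elim: c => [|c IH]; first by rewrite leqn0 => /eqP ->.
rewrite leq_eqVlt => /orP[/eqP->//|]; rewrite ltnS => /IH h.
rewrite SnS; lia.
Qed.

Lemma Sn_lt n a c : (a < c)%N -> (a < n)%N -> (Sn n a + (n - a) <= Sn n c)%N.
Proof.
move=> ac an; have := Sn_mono n ac; rewrite SnS.
have -> : (n - a.+1 + 1 = n - a)%N by lia.
done.
Qed.

Lemma Sn_closed n m : (m <= n)%N -> ((Sn n m).*2 + m * m = m * (n.*2.+1))%N.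
Proof.
elim: m => [|m IH] h; first by rewrite Sn0.
rewrite SnS; have := IH (ltnW h). nia.
Qed.

Lemma Sn_full n : Sn n n = symdim n.
Proof.
rewrite /symdim; have := Sn_closed (leqnn n) => h.
have -> : (n * n.+1 = (Sn n n).*2)%N by nia.
by rewrite doubleK.
Qed.

Lemma sidxE n i j : sidx n i j = (Sn n (minn i j) + (maxn i j - minn i j))%N.
Proof. by []. Qed.

Lemma sidx_lt n i j : (i < n)%N -> (j < n)%N -> (sidx n i j < symdim n)%N.
Proof.
move=> hi hj; rewrite sidxE -Sn_full.
have hm : (minn i j < n)%N by lia.
have := Sn_mono n (hm : (minn i j).+1 <= n)%N.
rewrite SnS; lia.
Qed.

Lemma sidx_inj n a b c d : (a <= b)%N -> (b < n)%N -> (c <= d)%N -> (d < n)%N ->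
  sidx n a b = sidx n c d -> a = c /\ b = d.
Proof.
move=> ab bn cd dn; rewrite !sidxE.
have -> : minn a b = a by lia. have -> : maxn a b = b by lia.
have -> : minn c d = c by lia. have -> : maxn c d = d by lia.
move=> e.
have ac : a = c.
  case: (ltngtP a c) => // h.
  - have := Sn_lt (n:=n) h (leq_ltn_trans ab bn); lia.
  - have := Sn_lt (n:=n) h (leq_ltn_trans cd dn); lia.
subst c; split => //; lia.
Qed.

Lemma sidxC n i j : sidx n i j = sidx n j i.
Proof. by rewrite /sidx minnC maxnC. Qed.

Local Open Scope ring_scope.
Lemma sum_vent (R : nzRingType) M (v : 'cV[R]_M) (k : nat) :
  \sum_(l < M | k == nat_of_ord l) v l 0 = vent v k.
Proof.
rewrite /vent; case: insubP => [l hk vl|hk].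
  rewrite (big_pred1 l) // => l' /=; by rewrite -vl -(inj_eq val_inj) /= eq_sym.
rewrite big_pred0 // => l; apply/eqP => e; move: hk; by rewrite e ltn_ord.
Qed.

Lemma Wmx_entry (R : nzRingType) n (j k : 'I_n) (v : 'cV[R]_(symdim n)) :
  (Wmx R j *m v) k 0 = vij v j k.
Proof.
rewrite mxE; under eq_bigr => l _ do rewrite mxE (fun_if (fun c => c * v l 0)) mul1r mul0r.
by rewrite -big_mkcond sum_vent.
Qed.

Lemma pair_sum (R : nmodType) n (F : 'I_n -> 'I_n -> R) (a b : 'I_n) :
  (a <= b)%N ->
  \sum_(j < n) \sum_(k < n | (j <= k)%N && (sidx n j k == sidx n a b)) F j k = F a b.
Proof.
move=> ab; rewrite (bigD1 a) //= [X in _ + X]big1 ?addr0; last first.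
  move=> j ja; apply: big1 => k /andP[jk /eqP e].
  have [h _] := sidx_inj jk (ltn_ord k) ab (ltn_ord b) e.
  by move: ja; rewrite -(inj_eq val_inj) /= h eqxx.
rewrite (bigD1 b) ?ab ?eqxx //= [X in _ + X]big1 ?addr0 // => k /andP[/andP[ak /eqP e] kb].
have [_ h] := sidx_inj ak (ltn_ord k) ab (ltn_ord b) e.
by move: kb; rewrite -(inj_eq val_inj) /= h eqxx.
Qed.

Lemma nu_entry (R : comNzRingType) n (x : 'cV[R]_n) (a b : 'I_n) :
  vij (veronese x) a b = x a 0 * x b 0.
Proof.
wlog ab : a b / (a <= b)%N.
  move=> H; case: (leqP a b) => h; first exact: H.
  by rewrite /vij sidxC mulrC -(H b a (ltnW h)).
rewrite /vij /vent; case: insubP => [l _ vl|]; last by rewrite sidx_lt.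
by rewrite mxE vl pair_sum.
Qed.
Definition cf (R : nzRingType) n (qi : 'cV[R]_n) (j k : 'I_n) : R :=
  if j == k then qi j 0 ^+ 2 else 2 * qi j 0 * qi k 0.

Lemma Amx_formula (R : comNzRingType) N n (q : 'I_N -> 'cV[R]_n) (v : 'cV[R]_(symdim n)) i :
  (Amx q *m v) i 0 = \sum_(j < n) \sum_(k < n | (j <= k)%N) cf (q i) j k * vij v j k.
Proof.
rewrite mxE.
have E : forall l : 'I_(symdim n), Amx q i l * v l 0 = \sum_(j < n) \sum_(k < n) (if (j <= k)%N && (sidx n j k == l) then cf (q i) j k * v l 0 else 0).
  move=> l; rewrite mxE mulr_suml; apply: eq_bigr => j _.
  rewrite mulr_suml big_mkcond; apply: eq_bigr => k _; by case: ifP.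
rewrite (eq_bigr _ (fun l _ => E l)).
rewrite exchange_big /=; apply: eq_bigr => j _.
rewrite exchange_big /= [RHS]big_mkcond /=; apply: eq_bigr => k _.
case: (leqP j k) => jk /=.
  by rewrite /vij -sum_vent big_distrr /= [RHS]big_mkcond.
by apply: big1 => l _.
Qed.

Lemma sym_sum (R : comNzRingType) n (F : 'I_n -> 'I_n -> R) :
  (forall j k, F j k = F k j) ->
  \sum_(j < n) \sum_(k < n) F j k =
  \sum_(j < n) \sum_(k < n | (j <= k)%N) (if j == k then F j j else 2 * F j k).
Proof.
move=> Fs.
have L : forall j : 'I_n, \sum_(k < n) F j k =
   F j j + \sum_(k < n | (j < k)%N) F j k + \sum_(k < n | (k < j)%N) F j k.
  move=> j; rewrite (bigID (fun k : 'I_n => (j <= k)%N)) /=; congr (_ + _).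
    rewrite (bigD1 j) ?leqnn //=; congr (_ + _); apply: eq_bigl => k.
    by rewrite ltn_neqAle -(inj_eq val_inj) /= eq_sym andbC.
  by apply: eq_bigl => k; rewrite -ltnNge.
have L2 : forall j : 'I_n,
   \sum_(k < n | (j <= k)%N) (if j == k then F j j else 2 * F j k) =
   F j j + 2 * \sum_(k < n | (j < k)%N) F j k.
  move=> j; rewrite (bigD1 j) ?leqnn //= eqxx; congr (_ + _).
  rewrite mulr_sumr; apply: eq_big => k.
    by rewrite ltn_neqAle -(inj_eq val_inj) /= eq_sym andbC.
  by move=> /andP[_ /negbTE]; rewrite eq_sym => ->.
rewrite (eq_bigr _ (fun j _ => L j)) (eq_bigr _ (fun j _ => L2 j)).
rewrite !big_split /=; rewrite -addrA; congr (_ + _).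
have -> : \sum_(j < n) \sum_(k < n | (k < j)%N) F j k =
          \sum_(j < n) \sum_(k < n | (j < k)%N) F j k.
  under eq_bigr => j _ do rewrite big_mkcond.
  rewrite exchange_big /=; apply: eq_bigr => k _.
  rewrite [RHS]big_mkcond; apply: eq_bigr => j _.
  by rewrite Fs.
rewrite -big_split /=; apply: eq_bigr => j _.
by rewrite mulr2n mulrDl mul1r.
Qed.

Lemma quadE (R : comNzRingType) n (qi x : 'cV[R]_n) :
  (x^T *m Qmx qi *m x) 0 0 = \sum_(j < n) \sum_(k < n) (qi j 0 * x j 0) * (qi k 0 * x k 0).
Proof.
rewrite /Qmx mulmxA -mulmxA mxE big_ord1 !mxE mulr_suml; apply: eq_bigr => j _.
rewrite mxE mulr_sumr; apply: eq_bigr => k _; rewrite !mxE; ring.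
Qed.

Lemma feas_nu (R : rcfType) N n (q : 'I_N -> 'cV[R]_n) y x :
  P0_feasible q y x -> P0g_feasible q y (veronese x).
Proof.
move=> hx; split; last by move=> j; rewrite nu_entry -expr2 sqr_ge0.
apply/matrixP => i c; rewrite (ord1 c) [RHS]mxE hx Amx_formula quadE.
rewrite (@sym_sum _ _ (fun j k => (q i j 0 * x j 0) * (q i k 0 * x k 0))); last by move=> *; ring.
apply: eq_bigr => j _; apply: eq_bigr => k _.
rewrite nu_entry /cf; case: eqP => [->|_]; ring.
Qed.

Lemma l0_nu (R : rcfType) n (x : 'cV[R]_n) : l0group (veronese x) = l0 x.
Proof.
rewrite /l0group /l0; apply: eq_card => j; rewrite !inE.
case: (boolP (x j 0 == 0)) => [/eqP h|h].
  apply/negbF/eqP/matrixP => k c; rewrite (ord1 c) Wmx_entry nu_entry h mul0r mxE //.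
apply/negP => /eqP W; have := congr1 (fun M : 'M[R]_(n,1) => M j 0) W.
rewrite Wmx_entry nu_entry mxE => /eqP; rewrite mulf_eq0 (negbTE h).
done.
Qed.

Lemma feasN (R : comNzRingType) N n (q : 'I_N -> 'cV[R]_n) y x :
  P0_feasible q y x -> P0_feasible q y (- x).
Proof. move=> hx i; rewrite hx; have -> : (- x)^T = - x^T by apply/matrixP => a b; rewrite !mxE. by rewrite !(mulNmx, mulmxN) opprK. Qed.

Lemma l0N (R : nzRingType) n (x : 'cV[R]_n) : l0 (- x) = l0 x.
Proof. by rewrite /l0; apply: eq_card => j; rewrite !inE mxE oppr_eq0. Qed.

Lemma sq_pm (R : rcfType) n (x z : 'cV[R]_n) :
  (forall a b, x a 0 * x b 0 = z a 0 * z b 0) -> x = z \/ x = - z.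
Proof.
move=> H; case: (boolP [exists a, z a 0 != 0]).
  move=> /existsP [a za].
  have : x a 0 ^+ 2 == z a 0 ^+ 2 by rewrite !expr2 H.
  rewrite eqf_sqr => /orP[/eqP e|/eqP e].
    left; apply/matrixP => b c; rewrite (ord1 c).
    apply: (mulfI za); by rewrite -{1}e H.
  right; apply/matrixP => b c; rewrite (ord1 c) mxE.
  apply: (mulfI za); by rewrite mulrN -{1}(opprK (z a 0)) -e mulNr H.
move=> /existsPn hz; left; apply/matrixP => b c; rewrite (ord1 c).
have zb : z b 0 = 0 by apply/eqP; have := hz b; rewrite negbK.
apply/eqP; rewrite zb -sqrf_eq0 expr2 H zb mul0r //.
Qed.

Lemma l0_inv (R : rcfType) n (v : 'cV[R]_(symdim n)) : (l0 (veronese_inv v) <= l0group v)%N.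
Proof.
rewrite /veronese_inv; case: [seq _ <- _ | _] => [|i _].
  have -> : l0 (0 : 'cV[R]_n) = 0%N.
    by rewrite /l0; apply/eqP; rewrite cards_eq0; apply/eqP/setP => j; rewrite !inE mxE eqxx.
  done.
case: ifP => _.
  apply: subset_leq_card; apply/subsetP => j; rewrite !inE mxE mulf_eq0 negb_or => /andP[_ h].
  apply/negP => /eqP W; have := congr1 (fun M : 'M[R]_(n,1) => M i 0) W.
  by rewrite Wmx_entry mxE => e; rewrite e eqxx in h.
have -> : l0 (0 : 'cV[R]_n) = 0%N.
  by rewrite /l0; apply/eqP; rewrite cards_eq0; apply/eqP/setP => j; rewrite !inE mxE eqxx.
done.
Qed.
Unset Implicit Arguments. Set Strict Implicit.
Theorem theorem1 (R : rcfType) (n N : nat) (hn : (1 <= n)%N) (hN : (1 <= N)%N)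
  (q : 'I_N -> 'cV[R]_n) (y : 'I_N -> R) (vstar : 'cV[R]_(symdim n)) :
  P0g_solution q y vstar ->
  (forall v : 'cV[R]_(symdim n), P0g_solution q y v -> v = vstar) ->
  veronese_inv vstar != 0 ->
  (forall i : 'I_N,
     y i = ((veronese_inv vstar)^T *m Qmx (q i) *m veronese_inv vstar) 0 0) ->
  forall x : 'cV[R]_n,
    P0_solution q y x <-> (x = veronese_inv vstar \/ x = - veronese_inv vstar).
Proof.
move=> [fs opt] uniq hxs hy x.
have fxs : P0_feasible q y (veronese_inv vstar) := hy.
have gxs := feas_nu fxs.
have e1 : l0group (veronese (veronese_inv vstar)) = l0group vstar.
  apply/eqP; rewrite eqn_leq (opt _ gxs) andbT l0_nu; exact: l0_inv.
have nxs : veronese (veronese_inv vstar) = vstar.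
  apply: uniq; split => // v' fv'; rewrite e1; exact: opt.
have lb : forall x', P0_feasible q y x' -> (l0 (veronese_inv vstar) <= l0 x')%N.
  move=> x' f'; rewrite -l0_nu -(l0_nu x') e1; exact: opt (feas_nu f').
split.
  move=> [fx ox]; have h1 := ox _ fxs.
  have nx : veronese x = vstar.
    apply: uniq; split; first exact: feas_nu fx.
    move=> v' fv'; rewrite l0_nu; apply: leq_trans h1 _.
    rewrite -l0_nu e1; exact: opt.
  apply: sq_pm => a b; by rewrite -nu_entry -[RHS]nu_entry nx nxs.
case=> ->; split.
- exact: fxs.
- exact: lb.
- exact: feasN.
- by move=> x' f'; rewrite l0N; exact: lb.
Qed.
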